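(* Let $p,q$ be primes and $r\ge1$. Every group of the form $\mathbb{Z}_{p^r}\rtimes_\phi\mathbb{Z}_q$ belongs, up to isomorphism, to one of the following five classes: Class 1: the groups $\mathbb{Z}_{p^r}\rtimes_\phi\mathbb{Z}_q$ with $q\mid p-1$, $r\ge1$ and $\phi(1)(1)\neq1$ (the $q$-hedral groups); Class 2: the dihedral groups $D_{2^r}=\langle x,y\mid x^{2^r}=y^2=e,\ yx=x^{2^r-1}y\rangle$ for $r\ge2$; Class 3: the quasi-dihedral groups $QD_{2^r}=\langle x,y\mid x^{2^r}=y^2=e,\ yx=x^{2^{r-1}-1}y\rangle$ for $r>2$; Class 4: the groups $P_{p,r}=\langle x,y\mid x^{p^r}=y^p=e,\ yx=x^{p^{r-1}+1}y\rangle$ for $p$ prime and $r\ge2$, excluding the case $p=r=2$; Class 5: the direct products $\mathbb{Z}_{p^r}\times\mathbb{Z}_q$ for $p,q$ prime and $r\ge1$. Moreover, these five classes are disjoint (no group in one class is isomorphic to a group in another class).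
   Context: For positive integers $n,q$ and a group homomorphism $\phi$ from $\mathbb{Z}_q$ to the automorphism group of the additive group $\mathbb{Z}_n$, the semi-direct product $\mathbb{Z}_n\rtimes_\phi\mathbb{Z}_q$ is the set $\{(a,b): a\in\mathbb{Z}_n, b\in\mathbb{Z}_q\}$ with product $(a_1,b_1)(a_2,b_2)=(a_1+\phi(b_1)(a_2),\,b_1+b_2)$. Such $\phi$ is determined by $\phi(1)(1)\in\mathbb{Z}_n^\ast$, with $\phi(1)(1)^q\equiv1\pmod n$ and $\phi(b)(a)=a\,\phi(1)(1)^b$; the choice $\phi(1)(1)=1$ gives the direct product. *)

(* Defs.v *)
From HB Require Import structures.
From mathcomp Require Import all_boot all_order all_algebra all_fingroup.

Set Implicit Arguments.
Unset Strict Implicit.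
Unset Printing Implicit Defensive.

Import GRing.Theory.

(* The homomorphism phi : Z_q -> Aut(Z_n) is encoded by a = phi(1)(1) in Z_n
   with a^q = 1 (which forces a to be a unit); phi(b)(x) = x * a^b. *)
Record phi_data (n q : nat) := PhiData {
  phi1 : 'Z_n;
  phi1_ok : (1 < q) && (phi1 ^+ q == 1)%R
}.

(* Carrier of Z_n \rtimes_phi Z_q : pairs (a, b); the type depends on phi. *)
Definition sdpT (n q : nat) (u : phi_data n q) : Type := ('Z_n * 'Z_q)%type.

Section SemiDirect.
Variables (n q : nat) (u : phi_data n q).

HB.instance Definition _ := Finite.on (sdpT u).
Local Notation sdpT := (sdpT u).

Local Notation a := (phi1 u).

Definition sdp_mul (x y : sdpT) : sdpT :=
  ((x.1 + y.1 * a ^+ (x.2 : nat))%R, (x.2 + y.2)%R).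
Definition sdp_one : sdpT := (0%R, 0%R).
Definition sdp_inv (x : sdpT) : sdpT :=
  ((- (x.1 * a ^+ nat_of_ord (- x.2)%R))%R, (- x.2)%R).

Lemma sdp_q : (Zp_trunc q).+2 = q.
Proof. by case/andP: (phi1_ok u) => q1 _; rewrite Zp_cast. Qed.

Lemma sdp_expa m : (a ^+ (m %% q) = a ^+ m)%R.
Proof.
case/andP: (phi1_ok u) => _ /eqP aq.
by rewrite {2}(divn_eq m q) GRing.exprD mulnC GRing.exprM aq GRing.expr1n GRing.mul1r.
Qed.

Lemma sdp_expa' m : (a ^+ (m %% (Zp_trunc q).+2) = a ^+ m)%R.
Proof. by rewrite sdp_q sdp_expa. Qed.

Lemma sdp_mulA : associative sdp_mul.
Proof.
move=> [x1 b1] [x2 b2] [x3 b3]; rewrite /sdp_mul /=; congr (_, _);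
  last by rewrite GRing.addrA.
rewrite sdp_expa' GRing.exprD GRing.mulrDl -!GRing.addrA.
by rewrite -GRing.mulrA [(a ^+ b2 * _)%R]GRing.mulrC.
Qed.

Lemma sdp_mul1 : left_id sdp_one sdp_mul.
Proof.
by move=> [x b]; rewrite /sdp_mul /= GRing.expr0 GRing.mulr1 !GRing.add0r.
Qed.

Lemma sdp_mulV : left_inverse sdp_one sdp_inv sdp_mul.
Proof.
move=> [x b]; rewrite /sdp_mul /sdp_inv /=.
by rewrite GRing.addNr GRing.addrC GRing.addrN.
Qed.

HB.instance Definition _ := Finite_isGroup.Build sdpT sdp_mulA sdp_mul1 sdp_mulV.

End SemiDirect.

Definition semidirect (n q : nat) (u : phi_data n q) : {set sdpT u} :=
  [set: sdpT u].

Local Open Scope group_scope.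

Definition class1 (gT : finGroupType) (G : {set gT}) : Prop :=
  exists (p q r : nat) (u : phi_data (p ^ r)%N q),
    [/\ prime p, prime q, (0 < r)%N, (q %| p.-1)%N & phi1 u != 1%R] /\
    G \isog semidirect u.

Definition class2 (gT : finGroupType) (G : {set gT}) : Prop :=
  exists r : nat, (2 <= r)%N /\
    G \isog Grp (x : y : x ^+ (2 ^ r)%N, y ^+ 2, y * x = x ^+ (2 ^ r - 1)%N * y).

Definition class3 (gT : finGroupType) (G : {set gT}) : Prop :=
  exists r : nat, (2 < r)%N /\
    G \isog Grp (x : y : x ^+ (2 ^ r)%N, y ^+ 2,
                         y * x = x ^+ (2 ^ (r - 1) - 1)%N * y).

Definition class4 (gT : finGroupType) (G : {set gT}) : Prop :=
  exists p r : nat, [/\ prime p, (2 <= r)%N & ~ (p = 2 /\ r = 2)%N] /\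
    G \isog Grp (x : y : x ^+ (p ^ r)%N, y ^+ p,
                         y * x = x ^+ (p ^ (r - 1) + 1)%N * y).

Definition class5 (gT : finGroupType) (G : {set gT}) : Prop :=
  exists p q r : nat, [/\ prime p, prime q & (0 < r)%N] /\
    G \isog [set: ('Z_(p ^ r)%N * 'Z_q)%type].

(* Main.v *)
Require Import Defs.
From mathcomp Require Import all_boot all_order all_algebra all_fingroup.
From mathcomp Require Import all_solvable.

Module Aux.
Set Implicit Arguments.
Unset Strict Implicit.
Unset Printing Implicit Defensive.
Import GRing.Theory.
Section Part_A.


Section Basics.
Local Open Scope group_scope.
Variables (n q : nat) (u : phi_data n q).
Hypothesis n_gt1 : (1 < n)%N.
Local Notation a := (phi1 u).

Lemma q_gt1 : (1 < q)%N.
Proof. by case/andP: (phi1_ok u). Qed.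

Lemma aq1 : (a ^+ q = 1)%R.
Proof. by case/andP: (phi1_ok u) => _ /eqP. Qed.

Lemma sdp_mulE (x y : sdpT u) :
  x * y = ((x.1 + y.1 * a ^+ (x.2 : nat))%R, (x.2 + y.2)%R).
Proof. by []. Qed.

Lemma sdp_oneE : (1 : sdpT u) = (0%R, 0%R).
Proof. by []. Qed.

Definition sx : sdpT u := (1%R, 0%R).
Definition sy : sdpT u := (0%R, 1%R).

Lemma sxX k : sx ^+ k = (k%:R, 0)%R.
Proof.
elim: k => [|k IH]; first by [].
rewrite expgSr IH sdp_mulE /= expr0 mulr1 addr0 -natr1 //.
Qed.

Lemma Zn_nat_eq0 k : ((k%:R : 'Z_n) == 0)%R = (n %| k)%N.
Proof.
apply/eqP/idP => [H|H].
  by rewrite /dvdn -(val_Zp_nat n_gt1) H.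
by apply: val_inj; rewrite /= (val_Zp_nat n_gt1); apply/eqP.
Qed.

Lemma order_sx : #[sx] = n.
Proof.
apply/eqP; rewrite eqn_dvd; apply/andP; split.
  by rewrite order_dvdn sxX sdp_oneE; apply/eqP; congr (_, _); apply/eqP; rewrite Zn_nat_eq0.
have := expg_order sx; rewrite sxX sdp_oneE => -[/eqP].
by rewrite Zn_nat_eq0.
Qed.

Lemma card_sdp : #|[set: sdpT u]| = (n * q)%N.
Proof. by rewrite cardsT card_prod !card_ord !Zp_cast // q_gt1. Qed.

Lemma sy_notin : sy \notin <[sx]>.
Proof.
apply/cycleP => -[k]; rewrite sxX => -[_].
by rewrite modn_small.
Qed.

Lemma sdp_nonabelian : a != 1%R -> ~~ abelian [set: sdpT u].
Proof.
move=> a1; apply/negP => /centsP cG.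
have := congr1 fst (cG sx (in_setT _) sy (in_setT _)).
rewrite !sdp_mulE /sx /sy.
simpl fst; rewrite modn_small // expr1 expr0 mul1r mul0r addr0 add0r => H.
by case/eqP: a1.
Qed.

Definition sdp2prod (x : sdpT u) : ('Z_n * 'Z_q)%type := (x.1, x.2).

Lemma sdp2prodM : a = 1%R ->
  {in [set: sdpT u] &, {morph sdp2prod : x y / x * y}}.
Proof. by move=> a1 x y _ _; rewrite sdp_mulE a1 expr1n mulr1. Qed.

Lemma sdp_iso_prod : a = 1%R -> semidirect u \isog [set: ('Z_n * 'Z_q)%type].
Proof.
move=> a1; pose f := Morphism (sdp2prodM a1).
apply: (isom_isog f) => //; apply/isomP; split.
  by apply/injmP => -[x1 x2] [y1 y2] _ _ [-> ->].
rewrite morphimEdom; apply/setP => z; rewrite !inE; apply/imsetP.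
by exists z => //; case: z.
Qed.

End Basics.

End Part_A.

Section Part_B.

Lemma q_eq_p (p q r : nat) (u : phi_data (p ^ r) q) :
  prime p -> prime q -> (0 < r)%N -> phi1 u != 1%R -> ~~ (q %| p.-1)%N ->
  q = p /\ (1 < r)%N.
Proof.
move=> pp pq r0 a1 ndv.
have n_gt1 : (1 < p ^ r)%N by rewrite (ltn_exp2l 0) // prime_gt1.
have Ua : phi1 u \is a GRing.unit.
  by rewrite -(unitrX_pos _ (prime_gt0 pq)) (aq1 u) unitr1.
pose ua := FinRing.unit _ Ua.
have uaq : (ua ^+ q)%g = 1%g by apply: val_inj; rewrite FinRing.val_unitX (aq1 u).
have ua1 : ua != 1%g by apply: contra a1 => /eqP/(congr1 val) /= ->.
have oua := nt_prime_order pq uaq ua1.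
have : (q %| #|units_Zp (p ^ r)|)%N by rewrite -oua order_dvdG // inE.
rewrite card_units_Zp ?expn_gt0 ?prime_gt0 // totient_pfactor //.
rewrite Euclid_dvdM // (negbTE ndv) /= Euclid_dvdX // dvdn_prime2 //.
case/andP => /eqP -> r1; split => //.
by rewrite -(prednK r0) ltnS.
Qed.

End Part_B.

Section Part_C.
Local Open Scope group_scope.

Lemma pres_conv_exp rT (H : {group rT}) n q k :
  (H \homg Grp (x : y : x ^+ n, y ^+ q, y * x = x ^+ k * y)) =
  (H \homg Grp (x : y : x ^+ n, y ^+ q, x ^ y = x ^+ k)).
Proof.
apply/existsP/existsP => -[[x y]] /=; rewrite !xpair_eqE => /and4P[/eqP gen xn yq /eqP rel];
  exists (x, y^-1); rewrite /= !xpair_eqE cycleV gen eqxx xn expgVn (eqP yq) invg1 eqxx /=.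
  by apply/eqP; rewrite conjgE invgK mulgA rel mulgK.
by apply/eqP; rewrite -rel conjgE mulgA mulgK.
Qed.

Lemma pres_conv_inv rT (H : {group rT}) n q : (0 < n)%N ->
  (H \homg Grp (x : y : x ^+ n, y ^+ q, y * x = x ^+ (n - 1) * y)) =
  (H \homg Grp (x : y : x ^+ n, y ^+ q, x ^ y = x^-1)).
Proof.
move=> n0; rewrite pres_conv_exp.
apply: eq_existsb => -[x y] /=; rewrite !xpair_eqE.
congr (_ && _); apply: andb_id2l => /eqP xn1; congr (_ && (_ == _)).
by apply/eqP; rewrite eq_sym eq_invg_mul -expgS subn1 prednK // xn1.
Qed.

Lemma iso_pres_eq gT hT (G : {group gT}) (D : {group hT}) p1 p2 :
  G \isog Grp p1 -> D \isog Grp p2 ->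
  (forall rT (H : {group rT}), (H \homg Grp p1) = (H \homg Grp p2)) ->
  G \isog D.
Proof.
move=> isoG isoD E; rewrite isogEhom.
by rewrite isoD -E -isoG homg_refl isoG E -isoD homg_refl.
Qed.

Lemma iso_pres_tr gT (G : {group gT}) p1 p2 :
  G \isog Grp p2 ->
  (forall rT (H : {group rT}), (H \homg Grp p1) = (H \homg Grp p2)) ->
  G \isog Grp p1.
Proof. by move=> isoG E rT H; rewrite isoG E. Qed.

End Part_C.

Section Part_D.
Local Open Scope group_scope.

Lemma class2_facts gT (G : {group gT}) : class2 G ->
  [/\ extremal_class G = Dihedral, ~~ abelian G & exists m, #|G| = (2 ^ m)%N].
Proof.
case=> r [r2 isoG].
have n1 : (1 < r.+1)%N by apply: ltnW.
have isoD : G \isog [set: 'D_(2 ^ r.+1)].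
  apply: (iso_pres_eq isoG (Grp_2dihedral n1)) => rT H.
  by apply: pres_conv_inv; rewrite expn_gt0.
split; last by exists r.+1; rewrite (card_isog isoD) card_2dihedral.
  by apply/dihedral_classP; exists r.+1.
have [[x y] genG _] := generators_2dihedral n1 isoD.
have [_ [_ _ _ nc] _ _ _] := dihedral2_structure n1 genG isoD.
by rewrite -nil_class1 nc -ltnNge.
Qed.

Lemma class3_facts gT (G : {group gT}) : class3 G ->
  [/\ extremal_class G = SemiDihedral, ~~ abelian G & exists m, #|G| = (2 ^ m)%N].
Proof.
case=> r [r2 isoG].
have n3 : (3 < r.+1)%N by [].
have isoD : G \isog [set: 'SD_(2 ^ r.+1)].
  apply: (iso_pres_eq isoG (Grp_semidihedral n3)) => rT H.
  by rewrite !pres_conv_exp !subn1.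
split; last by exists r.+1; rewrite (card_isog isoD) card_semidihedral.
  by apply/semidihedral_classP; exists r.+1.
have [[x y] genG [oy _]] := generators_semidihedral n3 isoD.
have [_ [_ _ _ nc] _ _ _] := semidihedral_structure n3 genG isoD oy.
by rewrite -nil_class1 nc -ltnNge /= ltnW.
Qed.

Lemma class4_facts gT (G : {group gT}) : class4 G ->
  [/\ extremal_class G = ModularGroup, ~~ abelian G &
      exists p m, prime p /\ #|G| = (p ^ m)%N].
Proof.
case=> p [r [[pp r2 n22] isoG]].
have n2 : (2 < r.+1)%N by [].
have isoD : G \isog [set: 'Mod_(p ^ r.+1)].
  apply: (iso_pres_eq isoG (Grp_modular_group pp n2)) => rT H.
  by rewrite !pres_conv_exp subn1 addn1.
split; last by exists p, r.+1; rewrite (card_isog isoD) card_modular_group.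
  apply/modular_group_classP; exists p => //; exists r.+1 => //.
  case: eqP => [p2|_]; last by [].
  rewrite add1n ltnS ltn_neqAle r2 andbT; apply/eqP => r2'; apply: n22; split => //.
have [[x y] genG modG] := generators_modular_group pp n2 isoD.
by have [[_ nab _] _ _ _ _] := modular_group_structure pp n2 genG isoD modG.
Qed.

Lemma class1_facts gT (G : {group gT}) : class1 G ->
  ~~ abelian G /\ exists p q r, [/\ prime p, prime q, (0 < r)%N, (q %| p.-1)%N &
      #|G| = (p ^ r * q)%N].
Proof.
case=> p [q [r [u [[pp pq r0 dv a1] isoG]]]].
have n1 : (1 < p ^ r)%N by rewrite (ltn_exp2l 0) // prime_gt1.
rewrite /semidirect in isoG.
split; first by rewrite (isog_abelian isoG) sdp_nonabelian.
by exists p, q, r; split => //; rewrite (card_isog isoG) card_sdp.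
Qed.

Lemma class5_facts gT (G : {group gT}) : class5 G -> abelian G.
Proof.
case=> p [q [r [_ isoG]]]; rewrite (isog_abelian isoG).
apply/centsP => x _ y _; rewrite /commute; case: x y => [x1 x2] [y1 y2].
by congr (_, _); apply: GRing.addrC.
Qed.

End Part_D.

Section Part_E.
Local Open Scope group_scope.

Lemma pp_eq p p' a b : prime p -> prime p' -> (0 < a)%N -> (p ^ a = p' ^ b)%N ->
  p = p' /\ a = b.
Proof.
move=> pp pp' a0 E.
have : (p %| p' ^ b)%N by rewrite -E dvdn_exp.
rewrite Euclid_dvdX // dvdn_prime2 // => /andP[/eqP pp'' _]; subst p'.
by split => //; rewrite -(pfactorK a pp) E pfactorK.
Qed.

Lemma not_pp_class1 p q r p' m : prime p -> prime q -> (0 < r)%N ->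
  (q %| p.-1)%N -> prime p' -> (p ^ r * q)%N = (p' ^ m)%N -> False.
Proof.
move=> pp pq r0 dv pp' E.
have : (p %| p' ^ m)%N by rewrite -E dvdn_mulr // dvdn_exp.
rewrite Euclid_dvdX // dvdn_prime2 // => /andP[/eqP pp'' _]; subst p'.
have : (q %| p ^ m)%N by rewrite -E dvdn_mull.
rewrite Euclid_dvdX // dvdn_prime2 // => /andP[/eqP qp _]; subst q.
have p1 : (0 < p.-1)%N by rewrite -ltnS prednK ?prime_gt0 // prime_gt1.
by have := dvdn_leq p1 dv; rewrite -ltnS prednK ?prime_gt0 // ltnn.
Qed.

Lemma disjoint_classes (gT : finGroupType) (G : {group gT}) :
      ~ (class1 G /\ class2 G) /\ ~ (class1 G /\ class3 G) /\
      ~ (class1 G /\ class4 G) /\ ~ (class1 G /\ class5 G) /\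
      ~ (class2 G /\ class3 G) /\ ~ (class2 G /\ class4 G) /\
      ~ (class2 G /\ class5 G) /\ ~ (class3 G /\ class4 G) /\
      ~ (class3 G /\ class5 G) /\ ~ (class4 G /\ class5 G).
Proof.
have c12 : forall p, prime p -> class1 G -> (exists m, #|G| = (p ^ m)%N) -> False.
  move=> p' pp' /class1_facts[_ [p [q [r [pp pq r0 dv oG]]]]] [m oG'].
  exact: (not_pp_class1 pp pq r0 dv pp' (etrans (esym oG) oG')).
have pr2 : prime 2 by [].
split; first by move=> [c1 /class2_facts[_ _ [m oG]]]; exact: (c12 2 pr2 c1 (ex_intro _ m oG)).
split; first by move=> [c1 /class3_facts[_ _ [m oG]]]; exact: (c12 2 pr2 c1 (ex_intro _ m oG)).
split; first by move=> [c1 /class4_facts[_ _ [p [m [pp oG]]]]]; apply: (c12 p) => //; exists m.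
split; first by case=> /class1_facts[nab _] /class5_facts; rewrite (negbTE nab).
split; first by case=> /class2_facts[e _ _] /class3_facts[e' _ _]; rewrite e in e'.
split; first by case=> /class2_facts[e _ _] /class4_facts[e' _ _]; rewrite e in e'.
split; first by case=> /class2_facts[_ nab _] /class5_facts; rewrite (negbTE nab).
split; first by case=> /class3_facts[e _ _] /class4_facts[e' _ _]; rewrite e in e'.
split; first by case=> /class3_facts[_ nab _] /class5_facts; rewrite (negbTE nab).
by case=> /class4_facts[_ nab _] /class5_facts; rewrite (negbTE nab).
Qed.

End Part_E.

Section Part_F.
Local Open Scope group_scope.

Lemma covering (p q r : nat) (u : phi_data (p ^ r) q) :
      prime p -> prime q -> (0 < r)%N ->
      class1 (semidirect u) \/ class2 (semidirect u) \/ class3 (semidirect u) \/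
      class4 (semidirect u) \/ class5 (semidirect u).
Proof.
move=> pp pq r0.
have n1 : (1 < p ^ r)%N by rewrite (ltn_exp2l 0) // prime_gt1.
case: (eqVneq (phi1 u) 1%R) => [a1|a1].
  by do 4!right; exists p, q, r; split => //; apply: sdp_iso_prod.
case: (boolP (q %| p.-1)%N) => [dv|ndv].
  by left; exists p, q, r, u; split => //; apply: isog_refl.
have [qp r1] := q_eq_p pp pq r0 a1 ndv; subst q.
pose G := [set: sdpT u]%G.
have oG : #|G| = (p ^ r.+1)%N by rewrite card_sdp // expnSr.
have pG : p.-group G by rewrite /pgroup oG pnatX pnat_id.
have nab := sdp_nonabelian a1.
have iX : #|G : <[sx u]>| = p.
  by rewrite -divgS ?subsetT // -orderE order_sx // oG expnSr mulKn // expn_gt0 prime_gt0.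
have := maximal_cycle_extremal pG nab (cycle_cyclic _) (subsetT _) iX.
rewrite /semidirect.
case E: (extremal_class G) => //=.
- move=> _; case/modular_group_classP: E => p' pp' [m m23 isoM].
  have m2 : (2 < m)%N by apply: leq_trans m23; rewrite leq_addl.
  have [pe me] := pp_eq pp pp' (ltn0Sn r)
    (etrans (esym oG) (etrans (card_isog isoM) (card_modular_group pp' m2))).
  subst p' m.
  do 3!right; left; exists p, r; split.
    split => //.
    by case=> p2 r2; subst; rewrite eqxx in m23.
  apply: (iso_pres_tr (isoGrp_trans isoM (Grp_modular_group pp m2))) => rT H.
  by rewrite pres_conv_exp subn1 addn1.
- move=> _; case/dihedral_classP: E => m m1 isoD.
  have [pe me] := pp_eq pp (isT : prime 2) (ltn0Sn r)
    (etrans (esym oG) (etrans (card_isog isoD) (card_2dihedral m1))).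
  subst p m.
  right; left; exists r; split => //.
  apply: (iso_pres_tr (isoGrp_trans isoD (Grp_2dihedral m1))) => rT H.
  by apply: pres_conv_inv; rewrite expn_gt0.
- move=> _; case/semidihedral_classP: E => m m3 isoD.
  have [pe me] := pp_eq pp (isT : prime 2) (ltn0Sn r)
    (etrans (esym oG) (etrans (card_isog isoD) (card_semidihedral m3))).
  subst p m.
  do 2!right; left; exists r; split => //.
  apply: (iso_pres_tr (isoGrp_trans isoD (Grp_semidihedral m3))) => rT H.
  by rewrite !pres_conv_exp !subn1.
- move=> _; case/quaternion_classP: E => m m2 isoQ.
  have [pe me] := pp_eq pp (isT : prime 2) (ltn0Sn r)
    (etrans (esym oG) (etrans (card_isog isoQ) (card_quaternion m2))).
  subst p m.
  have [[x y] genG _] := generators_quaternion m2 isoQ.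
  have [_ _ [_ _ uniq _ _] _ _] := quaternion_structure m2 genG isoQ.
  have oy : #[sy u] = 2%N.
    apply: nt_prime_order => //.
      rewrite expgS expg1 sdp_mulE sdp_oneE /sy; simpl fst; simpl snd.
      by congr (_, _); apply: val_inj; rewrite /= ?mul0n ?mod0n.
  have oz : #[sx u ^+ (2 ^ r.-1)] = 2%N.
    have e2 : (2 ^ r = 2 * 2 ^ r.-1)%N by rewrite -expnS prednK.
    by rewrite orderXdiv order_sx // e2 ?mulnK ?expn_gt0 ?dvdn_mull.
  have := uniq _ (in_setT _) oy; rewrite -(uniq _ (in_setT _) oz) => E.
  by case/negP: (sy_notin u); rewrite E mem_cycle.
- by rewrite /extremal2 E => /andP[_]; rewrite !inE => /or3P[] /eqP.
Qed.

End Part_F.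

End Aux.

Theorem theorem1 :
  (forall (p q r : nat) (u : phi_data (p ^ r) q),
      prime p -> prime q -> 0 < r ->
      class1 (semidirect u) \/ class2 (semidirect u) \/ class3 (semidirect u) \/
      class4 (semidirect u) \/ class5 (semidirect u)) /\
  (forall (gT : finGroupType) (G : {group gT}),
      ~ (class1 G /\ class2 G) /\ ~ (class1 G /\ class3 G) /\
      ~ (class1 G /\ class4 G) /\ ~ (class1 G /\ class5 G) /\
      ~ (class2 G /\ class3 G) /\ ~ (class2 G /\ class4 G) /\
      ~ (class2 G /\ class5 G) /\ ~ (class3 G /\ class4 G) /\
      ~ (class3 G /\ class5 G) /\ ~ (class4 G /\ class5 G)).
Proof.
split; [exact: Aux.covering | exact: Aux.disjoint_classes].
Qed.
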